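(* Consider U-PB$(\hat x_0,\chi,\lambda_0,\bar\varepsilon,\overline N)$ described in the context, and let $i$ be the first iteration of a cycle with prox stepsize $\lambda$. Then: (a) if $\lambda\le(1-\chi)/(2L_f)$, then $t_i\le\frac{4\lambda M_f^2}{1-\chi}$; (b) if $\|x-y\|\le D$ for all $x,y\in\mathrm{dom}\, h$ (for some finite $D$), then $t_i\le\frac{\lambda(16M_f^2+L_f^2D^2)}{4(1-\chi)}$.
   Context: Setting: $f,h:\mathbb{R}^n\to\mathbb{R}\cup\{+\infty\}$ proper lsc convex, $\mathrm{dom}\, h\subseteq\mathrm{dom}\, f$, $\phi=f+h$, $\phi_*=\inf\phi$ attained. Subgradient oracle $f'(x)\in\partial f(x)$ on $\mathrm{dom}\, h$ with $\|f'(x)-f'(y)\|\le2M_f+L_f\|x-y\|$ for $x,y\in\mathrm{dom}\, h$, $M_f,L_f\ge0$. $\ell_f(u;x):=f(x)+\langle f'(x),u-x\rangle$. ''Convex function'' means proper lsc convex on $\mathbb{R}^n$. In (a), if $L_f=0$ the condition on $\lambda$ is vacuous. BU$(x^c,x,m_f,\lambda)$: given $\lambda>0$, convex $m_f\le f$ with $x=\mathrm{argmin}_u\{m_f(u)+h(u)+\frac1{2\lambda}\|u-x^c\|^2\}$, outputs any convex $m_f^+$ with $\max\{\overline m_f,\ell_f(\cdot;x)\}\le m_f^+\le f$, where $\overline m_f\le f$, $\overline m_f(x)=m_f(x)$ and $x=\mathrm{argmin}_u\{\overline m_f(u)+h(u)+\frac1{2\lambda}\|u-x^c\|^2\}$.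 U-PB$(\hat x_0,\chi,\lambda_0,\bar\varepsilon,\overline N)$, inputs in $\mathrm{dom}\, h\times[0,1)\times\mathbb{R}_{++}\times\mathbb{R}_{++}\times\{1,2,\ldots\}$: Step 0: $\lambda=\lambda_0$, $N=0$, $j=1$, $k=1$; choose convex $f_1$ with $\ell_f(\cdot;\hat x_0)\le f_1\le f$. Step 1: $x_j=\mathrm{argmin}_u\{(f_j+h)(u)+\frac1{2\lambda}\|u-\hat x_{k-1}\|^2\}$; if $\phi(x_j)-\phi_*\le\bar\varepsilon$ stop. Step 2: $\bar\phi_j=\phi(x_j)+\frac\chi{2\lambda}\|x_j-\hat x_{k-1}\|^2$ if $N=0$, else $\bar\phi_j=\min\{\bar\phi_{j-1},\phi(x_j)+\frac\chi{2\lambda}\|x_j-\hat x_{k-1}\|^2\}$; $N=N+1$; $t_j=\bar\phi_j-[(f_j+h)(x_j)+\frac1{2\lambda}\|x_j-\hat x_{k-1}\|^2]$. Step 3: if $t_j>(1-\chi)\bar\varepsilon/2$ and $N<\overline N$: null update $f_{j+1}=\mathrm{BU}(\hat x_{k-1},x_j,f_j,\lambda)$. Otherwise: if $t_j>(1-\chi)\bar\varepsilon/2$ and $N=\overline N$, reset update $\lambda\leftarrow\lambda/2$; else serious update $\hat x_k=x_j$, $\lambda_k=\lambda$, $k\leftarrow k+1$; then set $N=0$ and choose convex $f_{j+1}$ with $\ell_f(\cdot;\hat x_{k-1})\le f_{j+1}\le f$. Step 4: $j\leftarrow j+1$, go to Step 1. A cycle is a reset or serious iteration together with all consecutive null iterations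 immediately preceding it; its iterations share the same prox stepsize $\lambda$ and prox-center $\hat x_{k-1}$, and its first iteration is the one at which $N=0$ when entering Step 2. *)

(* Defs.v *)
From HB Require Import structures.
From mathcomp Require Import all_boot all_order all_algebra.
From mathcomp Require Import all_classical all_reals all_analysis.
Set Implicit Arguments. Unset Strict Implicit. Unset Printing Implicit Defensive.
Import Order.TTheory GRing.Theory Num.Theory.
Import numFieldNormedType.Exports.
Local Open Scope ring_scope.

Section Defs.
Context {R : realType} {n : nat}.
Local Notation E := 'rV[R]_n.

Definition dotp (u v : E) : R := \sum_(i < n) u ord0 i * v ord0 i.
Definition enorm (u : E) : R := Num.sqrt (dotp u u).

Local Open Scope ereal_scope.

Definition edom (f : E -> \bar R) : set E := [set x | f x < +oo].

(* proper, convex, lower semicontinuous on R^n ("convex function" in the paper) *)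
Definition proper_fun (f : E -> \bar R) : Prop :=
  (forall x, f x != -oo) /\ (exists x, f x < +oo).
Definition convex_fun (f : E -> \bar R) : Prop :=
  forall (x y : E) (t : R), (0 < t < 1)%R ->
    f (t *: x + (1 - t) *: y)%R <= t%:E * f x + (1 - t)%:E * f y.
Definition cvx (f : E -> \bar R) : Prop :=
  [/\ proper_fun f, convex_fun f & lower_semicontinuous f].

Definition is_subgrad (f : E -> \bar R) (x g : E) : Prop :=
  f x \is a fin_num /\ forall u, f x + (dotp g (u - x)%R)%:E <= f u.

Definition lin (f : E -> \bar R) (fp : E -> E) (x u : E) : \bar R :=
  f x + (dotp (fp x) (u - x)%R)%:E.

Definition is_argmin (F : E -> \bar R) (x : E) : Prop := forall u, F x <= F u.

Definition proxobj (m h : E -> \bar R) (lam : R) (xc u : E) : \bar R :=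
  m u + h u + ((2 * lam)^-1 * enorm (u - xc) ^+ 2)%R%:E.

(* output specification of BU(xc, x, m, lam) : mp is an admissible output *)
Definition BU_out (f h : E -> \bar R) (fp : E -> E)
    (xc x : E) (m : E -> \bar R) (lam : R) (mp : E -> \bar R) : Prop :=
  exists mbar : E -> \bar R,
    [/\ forall u, mbar u <= f u, mbar x = m x,
        is_argmin (proxobj mbar h lam xc) x,
        cvx mp &
        forall u, maxe (mbar u) (lin f fp x u) <= mp u /\ mp u <= f u].

Definition fresh_model (f : E -> \bar R) (fp : E -> E) (xc : E)
    (m : E -> \bar R) : Prop :=
  cvx m /\ forall u, lin f fp xc u <= m u /\ m u <= f u.

(* A run of U-PB(x0, chi, lam0, eps, Nbar) through iterations 1..J (1-based),
   none of which stopped at Step 1.  For iteration j: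
     lam j   : prox stepsize used at iteration j,
     N j     : value of the counter N when entering Step 1 (= entering Step 2),
     xc j    : prox-center \hat x_{k-1} of iteration j,
     fm j    : model f_j,
     x j     : x_j computed in Step 1,
     phib j  : \bar\phi_j computed in Step 2,
     t j     : t_j computed in Step 2. *)
Definition UPB_run (f h : E -> \bar R) (fp : E -> E) (phistar : R)
    (x0 : E) (chi lam0 eps : R) (Nbar : nat)
    (J : nat) (lam : nat -> R) (N : nat -> nat) (xc : nat -> E)
    (fm : nat -> E -> \bar R) (x : nat -> E) (phib t : nat -> \bar R) : Prop :=
  let phi := fun u => f u + h u in
  let thr := ((1 - chi) * eps / 2)%R in
  [/\ (* Step 0 *)
      [/\ lam 1%N = lam0, N 1%N = 0%N, xc 1%N = x0 & fresh_model f fp x0 (fm 1%N)],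
      (* Steps 1 and 2 for iterations 1..J *)
      (forall j, (1 <= j <= J)%N ->
        [/\ is_argmin (proxobj (fm j) h (lam j) (xc j)) (x j),
            ~ (phi (x j) - phistar%:E <= eps%:E),
            phib j = (if N j == 0%N then
                        phi (x j) + ((chi / (2 * lam j)) * enorm (x j - xc j) ^+ 2)%:E
                      else
                        mine (phib j.-1)
                          (phi (x j) + ((chi / (2 * lam j)) * enorm (x j - xc j) ^+ 2)%:E))
          & t j = phib j - (fm j (x j) + h (x j)
                           + ((2 * lam j)^-1 * enorm (x j - xc j) ^+ 2)%:E)]) &
      (* Step 3 (and Step 4): transition from iteration j to j+1, for j < J *)
      (forall j, (1 <= j < J)%N ->
        let N' := (N j).+1 in
        if (thr%:E < t j) && (N' < Nbar)%N then
          (* null update *)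
          [/\ lam j.+1 = lam j, N j.+1 = N', xc j.+1 = xc j &
              BU_out f h fp (xc j) (x j) (fm j) (lam j) (fm j.+1)]
        else if (thr%:E < t j) && (N' == Nbar) then
          (* reset update *)
          [/\ lam j.+1 = (lam j / 2)%R, N j.+1 = 0%N, xc j.+1 = xc j &
              fresh_model f fp (xc j.+1) (fm j.+1)]
        else
          (* serious update: \hat x_k = x_j becomes the new prox-center *)
          [/\ lam j.+1 = lam j, N j.+1 = 0%N, xc j.+1 = x j &
              fresh_model f fp (xc j.+1) (fm j.+1)])].

End Defs.

(* Main.v *)
Require Import Defs.
From HB Require Import structures.
From mathcomp Require Import all_boot all_order all_algebra.
From mathcomp Require Import all_classical all_reals all_analysis.
From mathcomp Require Import ring lra.
Import Order.TTheory GRing.Theory Num.Theory.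
Import numFieldNormedType.Exports.
Set Implicit Arguments. Unset Strict Implicit.
Local Open Scope ring_scope.

Lemma dotpZl (R : realType) (n : nat) (c : R) (u v : 'rV[R]_n) :
  dotp (c *: u) v = c * dotp u v.
Proof. rewrite /dotp mulr_sumr; apply: eq_bigr => j _; rewrite mxE; ring. Qed.
Lemma dotpZr (R : realType) (n : nat) (c : R) (u v : 'rV[R]_n) :
  dotp u (c *: v) = c * dotp u v.
Proof. rewrite /dotp mulr_sumr; apply: eq_bigr => j _; rewrite mxE; ring. Qed.
Lemma dotpBl (R : realType) (n : nat) (u w v : 'rV[R]_n) :
  dotp (u - w) v = dotp u v - dotp w v.
Proof. rewrite /dotp -sumrB; apply: eq_bigr => j _; rewrite !mxE; ring. Qed.
Lemma dotpDl (R : realType) (n : nat) (u w v : 'rV[R]_n) :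
  dotp (u + w) v = dotp u v + dotp w v.
Proof. rewrite /dotp -big_split; apply: eq_bigr => j _ /=; rewrite !mxE; ring. Qed.
Lemma dotpC (R : realType) (n : nat) (u v : 'rV[R]_n) : dotp u v = dotp v u.
Proof. rewrite /dotp; apply: eq_bigr => j _; ring. Qed.
Lemma dotp_ge0 (R : realType) (n : nat) (u : 'rV[R]_n) : 0 <= dotp u u.
Proof. rewrite /dotp; apply: sumr_ge0 => j _; rewrite -expr2; exact: sqr_ge0. Qed.
Lemma enorm_ge0 (R : realType) (n : nat) (u : 'rV[R]_n) : 0 <= enorm u.
Proof. exact: sqrtr_ge0. Qed.
Lemma enorm_sq (R : realType) (n : nat) (u : 'rV[R]_n) : enorm u ^+ 2 = dotp u u.
Proof. by rewrite /enorm sqr_sqrtr // dotp_ge0. Qed.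
Lemma enormZ (R : realType) (n : nat) (c : R) (u : 'rV[R]_n) : 0 <= c ->
  enorm (c *: u) = c * enorm u.
Proof.
move=> c0; rewrite /enorm dotpZl dotpC dotpZl mulrA -expr2 sqrtrM ?sqr_ge0 //.
by rewrite sqrtr_sqr ger0_norm.
Qed.
Lemma dotp0 (R : realType) (n : nat) (u v : 'rV[R]_n) : dotp u u = 0 -> dotp u v = 0.
Proof.
move=> H; rewrite /dotp big1 // => j _.
have := (psumr_eq0P (P := xpredT) (F := fun j => u ord0 j * u ord0 j)) _ H j isT.
move=> /(_ _) Hj; have -> : u ord0 j = 0.
  by apply/eqP; rewrite -sqrf_eq0 expr2 Hj // => k _; rewrite -expr2 sqr_ge0.
by rewrite mul0r.
Qed.
Lemma dotp_sq (R : realType) (n : nat) (a b : R) (u v : 'rV[R]_n) :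
  dotp (a *: u - b *: v) (a *: u - b *: v)
  = a ^+ 2 * dotp u u - 2 * a * b * dotp u v + b ^+ 2 * dotp v v.
Proof.
rewrite !dotpBl !dotpZl ![dotp u (_ - _)]dotpC ![dotp v (_ - _)]dotpC !dotpBl !dotpZl (dotpC v u); ring.
Qed.
Lemma CS (R : realType) (n : nat) (u v : 'rV[R]_n) : dotp u v <= enorm u * enorm v.
Proof.
have [A0|] := eqVneq (enorm u) 0.
  have : dotp u u = 0 by rewrite -enorm_sq A0 expr0n.
  by move/dotp0 => ->; rewrite A0 mul0r.
have [B0|] := eqVneq (enorm v) 0.
  have : dotp v v = 0 by rewrite -enorm_sq B0 expr0n.
  by move/dotp0 => H _; rewrite dotpC H B0 mulr0.
move=> Bn An.
have Ap : 0 < enorm u by rewrite lt0r An enorm_ge0.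
have Bp : 0 < enorm v by rewrite lt0r Bn enorm_ge0.
have := dotp_ge0 (enorm v *: u - enorm u *: v).
rewrite dotp_sq -!enorm_sq => H.
have H2 : 0 <= 2 * (enorm u * enorm v) * (enorm u * enorm v - dotp u v) by lra.
rewrite pmulr_rge0 in H2; first lra.
by rewrite mulr_gt0 // mulr_gt0.
Qed.
Local Open Scope ereal_scope.
Lemma edom_fin (R : realType) (n : nat) (h : 'rV[R]_n -> \bar R) u :
  cvx h -> edom h u -> h u = (fine (h u))%:E.
Proof.
case=> [[Hp _] _ _] Hu; move: (Hp u) Hu; rewrite /edom /=.
by case: (h u).
Qed.
Lemma edom_conv (R : realType) (n : nat) (h : 'rV[R]_n -> \bar R) (x y : 'rV[R]_n) (t : R) :
  cvx h -> edom h x -> edom h y -> (0 <= t <= 1)%R -> edom h (t *: x + (1 - t) *: y)%R.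
Proof.
move=> hc hx hy /andP[t0 t1].
have [->|tn0] := eqVneq t 0%R.
  by rewrite scale0r add0r subr0 scale1r.
have [->|tn1] := eqVneq t 1%R.
  by rewrite scale1r subrr scale0r addr0.
have tt : (0 < t < 1)%R by rewrite !lt_neqAle eq_sym tn0 tn1 t0 t1.
have := (let: And3 _ c _ := hc in c) x y t tt.
rewrite (edom_fin hc hx) (edom_fin hc hy) /edom /= => H.
by apply: (le_lt_trans H); rewrite -!EFinM -EFinD ltry.
Qed.
Lemma subgrad_fin (R : realType) (n : nat) (f : 'rV[R]_n -> \bar R) u g :
  is_subgrad f u g -> f u = (fine (f u))%:E.
Proof. by case=> H _; rewrite fineK. Qed.

Lemma telescope (R : realType) (n : nat) (f : 'rV[R]_n -> \bar R) (fp : 'rV[R]_n -> 'rV[R]_n)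
  (S : 'rV[R]_n -> Prop) (M L : R) (xc x : 'rV[R]_n) (k : nat) :
  (forall t : R, (0 <= t <= 1)%R -> S (t *: x + (1 - t) *: xc)%R) ->
  (forall u, S u -> is_subgrad f u (fp u)) ->
  (forall u v, S u -> S v -> (enorm (fp u - fp v) <= 2 * M + L * enorm (u - v))%R) ->
  (0 < k)%N ->
  (forall m, (m <= k)%N ->
   fine (f ((m%:R / k%:R) *: x + (1 - m%:R / k%:R) *: xc)%R) - fine (f xc)
     - m%:R / k%:R * dotp (fp xc) (x - xc)
     <= m%:R / k%:R * (2 * M * enorm (x - xc))
        + L * enorm (x - xc) ^+ 2 * (m%:R * (m%:R + 1)) * (k%:R^-1) ^+ 2 / 2)%R.
Proof.
move=> Sc Sg Sl k0.
have q0 : (0 < (k%:R : R)^-1)%R by rewrite invr_gt0 ltr0n.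
have Sxc : S xc by have := Sc 0%R; rewrite scale0r add0r subr0 scale1r; apply; lra.
set q := (k%:R^-1)%R; set r := enorm (x - xc).
elim=> [|m IH] mk.
  rewrite mul0r scale0r add0r subr0 scale1r.
  rewrite !mul0r; lra.
set y := ((m.+1%:R * q) *: x + (1 - m.+1%:R * q) *: xc)%R.
have mk' : (m <= k)%N by apply: ltnW.
have {IH} := IH mk'.
set y0 := ((m%:R * q) *: x + (1 - m%:R * q) *: xc)%R.
have tm : (0 <= m%:R * q <= 1)%R.
  apply/andP; split; first by rewrite mulr_ge0 // ltW.
  by rewrite /q ler_pdivrMr ?ltr0n // mul1r ler_nat.
have tm1 : (0 <= m.+1%:R * q <= 1)%R.
  apply/andP; split; first by rewrite mulr_ge0 // ltW.
  by rewrite /q ler_pdivrMr ?ltr0n // mul1r ler_nat.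
have Sy0 : S y0 by apply: Sc.
have Sy : S y by apply: Sc.
have [_ sg] := Sg _ Sy.
have := sg y0.
rewrite (subgrad_fin (Sg _ Sy)) (subgrad_fin (Sg _ Sy0)) -EFinD lee_fin.
have -> : (y0 - y = (- q) *: (x - xc))%R.
  apply/rowP => j; rewrite /y0 /y !mxE; rewrite -natr1; ring.
have ey : (y - xc = (m.+1%:R * q) *: (x - xc))%R.
  apply/rowP => j; rewrite /y !mxE; ring.
rewrite dotpZr.
have e1 : (dotp (fp y) (x - xc) = dotp (fp xc) (x - xc) + dotp (fp y - fp xc) (x - xc))%R.
  by rewrite dotpBl; ring.
have e2 : (dotp (fp y - fp xc) (x - xc) <= enorm (fp y - fp xc) * r)%R by apply: CS.
have e3 := Sl _ _ Sy Sxc.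
rewrite ey enormZ in e3; last by case/andP: tm1.
have r0 : (0 <= r)%R by apply: enorm_ge0.
have e4 : (q * dotp (fp y - fp xc) (x - xc) <= q * ((2 * M + L * (m.+1%:R * q * r)) * r))%R.
  rewrite ler_pM2l //; apply: (le_trans e2); apply: ler_wpM2r => //; by move: e3; rewrite -/r !mulrA.
have ms : (m.+1%:R = m%:R + 1 :> R)%R by rewrite natr1.
rewrite e1 ms /= => H IH.
rewrite ms in e4.
have E1 : (L * r ^+ 2 * ((m%:R + 1) * (m%:R + 1 + 1)) * q ^+ 2 / 2
   = L * r ^+ 2 * (m%:R * (m%:R + 1)) * q ^+ 2 / 2 + q * (L * ((m%:R + 1) * q * r) * r))%R by field.
rewrite E1.
have E2 : (q * ((2 * M + L * ((m%:R + 1) * q * r)) * r) = q * (2 * M * r) + q * (L * ((m%:R + 1) * q * r) * r))%R by ring.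
rewrite E2 in e4.
have E3 : (q * (dotp (fp xc) (x - xc) + dotp (fp y - fp xc) (x - xc)) = q * dotp (fp xc) (x - xc) + q * dotp (fp y - fp xc) (x - xc))%R by ring.
rewrite mulNr E3 in H.
have E4 : ((m%:R + 1) * q * dotp (fp xc) (x - xc) = m%:R * q * dotp (fp xc) (x - xc) + q * dotp (fp xc) (x - xc))%R by ring.
have E5 : ((m%:R + 1) * q * (2 * M * r) = m%:R * q * (2 * M * r) + q * (2 * M * r))%R by ring.
rewrite E4 E5.
lra.
Qed.
Local Close Scope ereal_scope.
Lemma lim_le (R : realType) (X Y Z : R) :
  0 <= Z -> (forall k : nat, (0 < k)%N -> X <= Y + Z / k%:R) -> X <= Y.
Proof.
move=> Z0 H; apply/ler_addgt0Pr => e e0.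
have Ze : 0 <= Z / e by rewrite divr_ge0 // ltW.
set k := (Num.Def.archi_bound (Z / e)).+1.
have kb : Z / e < k%:R.
  apply: (lt_le_trans (archi_boundP Ze)); by rewrite ler_nat.
have k0 : (0 < k)%N by [].
apply: (le_trans (H k k0)); rewrite lerD2l.
have kp : 0 < (k%:R : R) by rewrite ltr0n.
rewrite ler_pdivrMr //.
rewrite ltr_pdivrMr // in kb.
by rewrite mulrC ltW.
Qed.

Lemma key (R : realType) (n : nat) (f : 'rV[R]_n -> \bar R) (fp : 'rV[R]_n -> 'rV[R]_n)
  (S : 'rV[R]_n -> Prop) (M L : R) (xc x : 'rV[R]_n) :
  0 <= L ->
  (forall t : R, (0 <= t <= 1)%R -> S (t *: x + (1 - t) *: xc)%R) ->
  (forall u, S u -> is_subgrad f u (fp u)) ->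
  (forall u v, S u -> S v -> (enorm (fp u - fp v) <= 2 * M + L * enorm (u - v))%R) ->
  fine (f x) - fine (f xc) - dotp (fp xc) (x - xc)
     <= 2 * M * enorm (x - xc) + L / 2 * enorm (x - xc) ^+ 2.
Proof.
move=> L0 Sc Sg Sl.
apply: (lim_le (Z := L / 2 * enorm (x - xc) ^+ 2)).
  by rewrite mulr_ge0 ?sqr_ge0 // divr_ge0.
move=> k k0.
have := telescope Sc Sg Sl k0 (leqnn k).
have kp : (k%:R : R) != 0 by rewrite pnatr_eq0 -lt0n.
rewrite divff // subrr scale1r scale0r addr0 !mul1r => H.
apply: (le_trans H); rewrite le_eqVlt; apply/orP; left; apply/eqP.
field; done.
Qed.
Local Open Scope ereal_scope.
Lemma x_dom (R : realType) (n : nat) (f h m : 'rV[R]_n -> \bar R) (fp : 'rV[R]_n -> 'rV[R]_n)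
  (lam : R) (xc xv xs z : 'rV[R]_n) (c : R) :
  cvx h -> is_subgrad f z (fp z) -> (forall u, lin f fp z u <= m u /\ m u <= f u) ->
  is_argmin (proxobj m h lam xc) xv -> f xs + h xs = c%:E -> edom h xv.
Proof.
move=> hc sz mb am fs.
have H := am xs; rewrite /proxobj in H.
have H2 : m xs + h xs <= c%:E by rewrite -fs; apply: leeD2r; case: (mb xs).
have H3 := le_trans H (leeD2r _ H2).
have mx : m xv != -oo.
  have := (mb xv).1; rewrite /lin (subgrad_fin sz) -EFinD.
  by case: (m xv).
rewrite /edom /= ltey; apply/negP => /eqP hx.
by move: H3; rewrite hx addey // addye // leye_eq.
Qed.
Lemma run_inv (R : realType) (n : nat)
    (f h : 'rV[R]_n -> \bar R) (fp : 'rV[R]_n -> 'rV[R]_n) (phistar : R)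
    (x0 : 'rV[R]_n) (chi lam0 eps : R) (Nbar : nat)
    (J : nat) (lam : nat -> R) (N : nat -> nat) (xc : nat -> 'rV[R]_n)
    (fm : nat -> 'rV[R]_n -> \bar R) (x : nat -> 'rV[R]_n)
    (phib t : nat -> \bar R) :
  cvx h -> (forall u, edom h u -> is_subgrad f u (fp u)) ->
  (exists xs, f xs + h xs = phistar%:E) -> edom h x0 -> (0 < lam0)%R ->
  UPB_run f h fp phistar x0 chi lam0 eps Nbar J lam N xc fm x phib t ->
  forall j, (1 <= j <= J)%N ->
  [/\ (0 < lam j)%R, edom h (xc j) &
      exists z, edom h z /\ forall u, lin f fp z u <= fm j u /\ fm j u <= f u].
Proof.
move=> hc sg [xs fs] hx0 l0.
rewrite /UPB_run /= => -[[l1 N1 xc1 fr1] steps trans].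
elim=> [//|j IH] /andP[j1 jJ].
case: j IH j1 jJ => [|j] IH _ jJ.
  by rewrite l1 xc1; split => //; exists x0; split => //; case: fr1.
have /IH [lp xd [z [zd zb]]] : (1 <= j.+1 <= J)%N by rewrite /= ltnW.
have [am _ _ _] := steps j.+1 (ltnW jJ).
have xjd : edom h (x j.+1) by apply: (x_dom hc (sg _ zd) zb am fs).
have := trans j.+1 jJ; rewrite /=.
case: ifP => _.
  case=> -> _ -> [mb [_ _ _ _ mpb]]; split => //.
  exists (x j.+1); split => // u; have [m1 m2] := mpb u; split => //.
  by apply: le_trans m1; rewrite le_max lexx orbT.
case: ifP => _.
  case=> -> _ -> [_ frb]; split => //; first by rewrite divr_gt0.
  by exists (xc j.+1).
case=> -> _ -> [_ frb]; split => //.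
by exists (x j.+1).
Qed.

Local Close Scope ereal_scope.
Local Open Scope classical_set_scope.
Theorem lemma4p3 (R : realType) (n : nat)
    (f h : 'rV[R]_n -> \bar R) (fp : 'rV[R]_n -> 'rV[R]_n) (Mf Lf phistar : R)
    (x0 : 'rV[R]_n) (chi lam0 eps : R) (Nbar : nat)
    (J : nat) (lam : nat -> R) (N : nat -> nat) (xc : nat -> 'rV[R]_n)
    (fm : nat -> 'rV[R]_n -> \bar R) (x : nat -> 'rV[R]_n)
    (phib t : nat -> \bar R) (i : nat) :
  (* standing assumptions *)
  cvx f -> cvx h ->
  edom h `<=` edom f ->
  (exists xs, (f xs + h xs = phistar%:E)%E) ->
  (forall u, (phistar%:E <= f u + h u)%E) ->
  0 <= Mf -> 0 <= Lf ->
  (forall u, edom h u -> is_subgrad f u (fp u)) ->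
  (forall u v, edom h u -> edom h v ->
     enorm (fp u - fp v) <= 2 * Mf + Lf * enorm (u - v)) ->
  (* inputs of U-PB *)
  edom h x0 -> 0 <= chi < 1 -> 0 < lam0 -> 0 < eps -> (1 <= Nbar)%N ->
  (* a run of U-PB through iteration J, and i is the first iteration of a cycle *)
  UPB_run f h fp phistar x0 chi lam0 eps Nbar J lam N xc fm x phib t ->
  (1 <= i <= J)%N -> N i = 0%N ->
  (* (a) *)
  ((Lf = 0 \/ lam i <= (1 - chi) / (2 * Lf)) ->
     (t i <= (4 * lam i * Mf ^+ 2 / (1 - chi))%:E)%E) /\
  (* (b) *)
  (forall D : R, (forall u v, edom h u -> edom h v -> enorm (u - v) <= D) ->
     (t i <= (lam i * (16 * Mf ^+ 2 + Lf ^+ 2 * D ^+ 2) / (4 * (1 - chi)))%:E)%E).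
Proof.
move=> fc hc dhf [xs fs] phimin M0 L0 sg Lip hx0 /andP[chi0 chi1] l0 e0 Nb run iiJ Ni.
have /andP[i1 iJ] := iiJ.
have [lp xcd _] := run_inv hc sg (ex_intro _ xs fs) hx0 l0 run iiJ.
move: (run); rewrite /UPB_run /= => -[[l1 N1 xc1 fr1] steps trans].
have fr : fresh_model f fp (xc i) (fm i).
  case: i iiJ i1 iJ Ni {lp xcd} => [//|[|i]] _ _ iJ Ni; first by rewrite xc1.
  have := trans i.+1 iJ; rewrite /=.
  case: ifP => _; first by case=> _; rewrite Ni.
  by case: ifP => _; case.
have [am _ phibE tE] := steps i iiJ.
have [_ frb] := fr.
have xd : edom h (x i) by apply: (x_dom hc (sg _ xcd) frb am fs).
rewrite Ni eqxx in phibE.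
set r := enorm (x i - xc i) in phibE tE.
have gxc := sg _ xcd; have gx := sg _ xd.
have Hx := edom_fin hc xd.
have Fx := subgrad_fin gx.
have Fxc := subgrad_fin gxc.
have [mlo mhi] := frb (x i).
have Mx : fm i (x i) = (fine (fm i (x i)))%:E.
  move: mlo mhi; rewrite /lin Fxc Fx -EFinD.
  by case: (fm i (x i)).
move: mlo; rewrite /lin Fxc Mx -EFinD lee_fin => mlo.
have tR : t i = (fine (f (x i)) - fine (fm i (x i)) - (1 - chi) / (2 * lam i) * r ^+ 2)%:E.
  rewrite tE phibE Fx Hx Mx -!EFinD /=; congr (_%:E); field.
  by rewrite lt0r_neq0.
have kk := key (S := edom h) (M := Mf) (xc := xc i) (x := x i) L0
   (fun t tt => edom_conv hc xd xcd tt) sg Lip.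
rewrite -/r in kk.
have T1 : fine (t i) <= 2 * Mf * r + Lf / 2 * r ^+ 2 - (1 - chi) / (2 * lam i) * r ^+ 2.
  rewrite tR /=; lra.
have T2 : 2 * lam i * fine (t i) <= 4 * lam i * Mf * r + lam i * Lf * r ^+ 2 - (1 - chi) * r ^+ 2.
  have H2 : 0 < 2 * lam i by rewrite mulr_gt0.
  rewrite -(ler_pM2l H2) in T1.
  apply: (le_trans T1); rewrite le_eqVlt; apply/orP; left; apply/eqP; field.
  by rewrite lt0r_neq0.
have r0 : 0 <= r by apply: enorm_ge0.
have tf : t i = (fine (t i))%:E by rewrite tR.
rewrite tf; set T := fine (t i); rewrite -/T in T2.
set p := 1 - chi; have pp : 0 < p by rewrite /p subr_gt0.
set lm := lam i; rewrite -/lm in T2 lp.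
have lp2 : 0 < 2 * lm by rewrite mulr_gt0.
split.
  move=> hL; rewrite lee_fin.
  have Lp : 2 * lm * Lf <= p.
    case: hL => [->|]; first by rewrite mulr0 ltW.
    have [->|Lpos] := eqVneq Lf 0; first by rewrite !mulr0 => _; rewrite ltW.
    have Lg : 0 < 2 * Lf by rewrite mulr_gt0 // lt0r Lpos L0.
    by rewrite ler_pdivlMr // mulrCA mulrA. 
  rewrite ler_pdivlMr //.
  rewrite -(ler_pM2l lp2).
  have h1 := sqr_ge0 (4 * lm * Mf - p * r).
  have h2 : 0 <= r ^+ 2 * (p - 2 * lm * Lf) by rewrite mulr_ge0 ?sqr_ge0 // subr_ge0.
  have h3 : p * (2 * lm * T) <= p * (4 * lm * Mf * r + lm * Lf * r ^+ 2 - p * r ^+ 2).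
    by rewrite ler_pM2l.
  nra.
move=> D HD; rewrite lee_fin.
have rD : r <= D by apply: HD.
rewrite ler_pdivlMr; last by rewrite mulr_gt0.
rewrite -(ler_pM2l lp2).
have h1 := sqr_ge0 (2 * p * r - lm * (4 * Mf + Lf * D)).
have h2 := sqr_ge0 (lm * (4 * Mf - Lf * D)).
have h3 : 0 <= p * Lf * r * (D - r) * lm.
  by rewrite !mulr_ge0 // ?subr_ge0 // ltW.
have h4 : 4 * p * (2 * lm * T) <= 4 * p * (4 * lm * Mf * r + lm * Lf * r ^+ 2 - p * r ^+ 2).
  by rewrite ler_pM2l // mulr_gt0.
nra.

Qed.
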